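(* Let $\mathcal{G}$ be a connected simple undirected graph on $N$ nodes, $G=(D+I_N)^{-1}(A+I_N)$, $T>0$ and $g<0$. Let $\Gamma=e^{gT}I_N-(e^{gT}-1)G$. Then every eigenvalue $\mu$ of $\Gamma$ is real and satisfies $-1<\mu\le 1$, $\mu=1$ is an eigenvalue of algebraic multiplicity one, and $\Gamma\mathbf{1}_N=\mathbf{1}_N$. Moreover, every solution of $\dot x(t)=gx(t)-gGx(kT)$ for $t\in[kT,(k+1)T)$, $k=0,1,2,\dots$ (with $x$ continuous) satisfies $x((k+1)T)=\Gamma x(kT)$ for all $k\ge 0$.
   Context: $A$ is the adjacency matrix and $D$ the degree matrix of the graph; $\mathbf{1}_N$ is the all-ones vector. *)

(* Defs.v *)
From HB Require Import structures.
From mathcomp Require Import all_boot all_order all_algebra.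
From Stdlib Require Import Reals Lra ClassicalEpsilon FunctionalExtensionality PropExtensionality.

Set Implicit Arguments.
Unset Strict Implicit.
Unset Printing Implicit Defensive.

Definition cfind (T : Type) (P : pred T) (n : nat) : option T :=
  match excluded_middle_informative (exists x, P x) with
  | left h => Some (proj1_sig (constructive_indefinite_description _ h))
  | right _ => None
  end.

Lemma cfind_correct (T : Type) (P : pred T) n x : cfind P n = Some x -> P x.
Proof.
rewrite /cfind; case: excluded_middle_informative => // h [<-].
exact: proj2_sig (constructive_indefinite_description _ h).
Qed.

Lemma cfind_complete (T : Type) (P : pred T) : (exists x, P x) -> exists n, cfind P n.
Proof.
move=> h; exists 0%N; rewrite /cfind; case: excluded_middle_informative => //.
Qed.

Lemma cfind_ext (T : Type) (P Q : pred T) : P =1 Q -> cfind P =1 cfind Q.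
Proof. by move=> /functional_extensionality ->. Qed.

Definition Reqb (x y : R) : bool := if Req_EM_T x y then true else false.
Lemma ReqP : Equality.axiom Reqb.
Proof. by move=> x y; rewrite /Reqb; case: Req_EM_T => h; constructor. Qed.

HB.instance Definition _ := hasDecEq.Build R ReqP.
HB.instance Definition _ := hasChoice.Build R (@cfind_correct R) (@cfind_complete R) (@cfind_ext R).

Lemma R_addrA : associative Rplus. Proof. move=> *; ring. Qed.
Lemma R_addrC : commutative Rplus. Proof. move=> *; ring. Qed.
Lemma R_add0r : left_id 0%R Rplus. Proof. move=> *; ring. Qed.
Lemma R_addNr : left_inverse 0%R Ropp Rplus. Proof. move=> *; ring. Qed.
HB.instance Definition _ := GRing.isZmodule.Build R R_addrA R_addrC R_add0r R_addNr.

Lemma R_mulrA : associative Rmult. Proof. move=> *; ring. Qed.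
Lemma R_mulrC : commutative Rmult. Proof. move=> *; ring. Qed.
Lemma R_mul1r : left_id 1%R Rmult. Proof. move=> *; ring. Qed.
Lemma R_mulrDl : left_distributive Rmult Rplus. Proof. move=> *; ring. Qed.
Lemma R_one_neq0 : (1%R : R) != 0%R. Proof. by apply/ReqP; exact: R1_neq_R0. Qed.
HB.instance Definition _ := GRing.Zmodule_isComNzRing.Build R
  R_mulrA R_mulrC R_mul1r R_mulrDl R_one_neq0.

Lemma R_mulVf (x : R) : x != 0%R -> Rmult (Rinv x) x = 1%R.
Proof. by move/ReqP=> h; apply: Rinv_l. Qed.
Lemma R_invr0 : Rinv 0%R = 0%R. Proof. exact: Rinv_0. Qed.
HB.instance Definition _ := GRing.ComNzRing_isField.Build R R_mulVf R_invr0.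

Record cpx := Cx { Re : R; Im : R }.
Definition C_to_pair (z : cpx) : R * R := (Re z, Im z).
Definition pair_to_C (p : R * R) : cpx := Cx p.1 p.2.
Lemma C_pairK : cancel C_to_pair pair_to_C. Proof. by case. Qed.
HB.instance Definition _ := Equality.copy cpx (can_type C_pairK).
HB.instance Definition _ := Choice.copy cpx (can_type C_pairK).

Definition C0 : cpx := Cx 0%R 0%R.
Definition C1 : cpx := Cx 1%R 0%R.
Definition Cadd (z w : cpx) : cpx := Cx (Rplus (Re z) (Re w)) (Rplus (Im z) (Im w)).
Definition Copp (z : cpx) : cpx := Cx (Ropp (Re z)) (Ropp (Im z)).
Definition Cmul (z w : cpx) : cpx :=
  Cx (Rminus (Rmult (Re z) (Re w)) (Rmult (Im z) (Im w)))
     (Rplus (Rmult (Re z) (Im w)) (Rmult (Im z) (Re w))).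
Definition Cinv (z : cpx) : cpx :=
  let d := Rplus (Rmult (Re z) (Re z)) (Rmult (Im z) (Im z)) in
  Cx (Rdiv (Re z) d) (Ropp (Rdiv (Im z) d)).

Lemma C_ext (a b c d : R) : a = c -> b = d -> Cx a b = Cx c d.
Proof. by move=> -> ->. Qed.

Lemma C_addrA : associative Cadd. Proof. by case=> ? ? [? ?] [? ?]; apply: C_ext => /=; ring. Qed.
Lemma C_addrC : commutative Cadd. Proof. by case=> ? ? [? ?]; apply: C_ext => /=; ring. Qed.
Lemma C_add0r : left_id C0 Cadd. Proof. by case=> ? ?; apply: C_ext => /=; ring. Qed.
Lemma C_addNr : left_inverse C0 Copp Cadd. Proof. by case=> ? ?; apply: C_ext => /=; ring. Qed.
HB.instance Definition _ := GRing.isZmodule.Build cpx C_addrA C_addrC C_add0r C_addNr.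

Lemma C_mulrA : associative Cmul. Proof. by case=> ? ? [? ?] [? ?]; apply: C_ext => /=; ring. Qed.
Lemma C_mulrC : commutative Cmul. Proof. by case=> ? ? [? ?]; apply: C_ext => /=; ring. Qed.
Lemma C_mul1r : left_id C1 Cmul. Proof. by case=> ? ?; apply: C_ext => /=; ring. Qed.
Lemma C_mulrDl : left_distributive Cmul Cadd.
Proof. by case=> ? ? [? ?] [? ?]; apply: C_ext => /=; ring. Qed.
Lemma C_one_neq0 : C1 != C0.
Proof. by apply/eqP => -[] /R1_neq_R0. Qed.
HB.instance Definition _ := GRing.Zmodule_isComNzRing.Build cpx
  C_mulrA C_mulrC C_mul1r C_mulrDl C_one_neq0.

Lemma C_mulVf (z : cpx) : z != C0 -> Cmul (Cinv z) z = C1.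
Proof.
case: z => a b /eqP hz; rewrite /Cmul /Cinv /=.
have hd : Rplus (Rmult a a) (Rmult b b) <> 0%R.
  move=> h; apply: hz; have ha : a = 0%R by nra.
  have hb : b = 0%R by nra.
  by rewrite ha hb.
by apply: C_ext; field.
Qed.
Lemma C_invr0 : Cinv C0 = C0.
Proof. rewrite /Cinv /=; apply: C_ext; rewrite /Rdiv; ring. Qed.
HB.instance Definition _ := GRing.ComNzRing_isField.Build cpx C_mulVf C_invr0.

Definition RtoC (r : R) : cpx := Cx r 0%R.

Local Open Scope ring_scope.

Definition simple_graph (N : nat) (e : rel 'I_N) : Prop :=
  symmetric e /\ irreflexive e.
Definition connected_graph (N : nat) (e : rel 'I_N) : Prop :=
  forall i j : 'I_N, connect e i j.

Definition adjmx (N : nat) (e : rel 'I_N) : 'M[R]_N :=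
  \matrix_(i, j) (e i j)%:R.
Definition degmx (N : nat) (e : rel 'I_N) : 'M[R]_N :=
  \matrix_(i, j) ((i == j)%:R * #|[set k | e i k]|%:R).

Definition Gmx (N : nat) (e : rel 'I_N) : 'M[R]_N :=
  invmx (degmx e + 1%:M) *m (adjmx e + 1%:M).

Definition Gammamx (N : nat) (e : rel 'I_N) (g T : R) : 'M[R]_N :=
  exp (Rmult g T) *: 1%:M - (exp (Rmult g T) - 1) *: Gmx e.

Definition onesv (N : nat) : 'cV[R]_N := const_mx 1.

Definition deriv_within (f : R -> R) (D : R -> Prop) (l t : R) : Prop :=
  limit1_in (fun s => Rdiv (Rminus (f s) (f t)) (Rminus s t))
            (fun s => D s /\ s <> t) l t.

(* Main.v *)
Require Import Defs.
From Stdlib Require Import Reals Lra.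
From HB Require Import structures.
From mathcomp Require Import all_boot all_order all_algebra.
From mathcomp Require Import ring.
Import GRing.Theory.
Local Open Scope ring_scope.

Lemma RaddE (x y : R) : x + y = Rplus x y. Proof. by []. Qed.
Lemma RmulE (x y : R) : x * y = Rmult x y. Proof. by []. Qed.
Lemma RoppE (x : R) : - x = Ropp x. Proof. by []. Qed.
Lemma RinvE (x : R) : x^-1 = Rinv x. Proof. by []. Qed.
Lemma R0E : (@GRing.zero _ : R) = R0. Proof. by []. Qed.
Lemma R1E : (@GRing.one _ : R) = R1. Proof. by []. Qed.
Lemma Z0E : IZR Z0 = (0 : R). Proof. by []. Qed.
Ltac toR := rewrite ?RaddE ?RmulE ?RoppE ?RinvE ?R0E ?R1E.

Lemma natRE (n : nat) : (n%:R : R) = INR n.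
Proof.
elim: n => [//|n IH]; rewrite -addn1 natrD IH plus_INR /=; by [].
Qed.

Definition sdeg {N} (e : rel 'I_N) (i : 'I_N) : R := #|[set k | e i k]|%:R + 1.
Definition Mw {N} (e : rel 'I_N) (i j : 'I_N) : R := (e i j)%:R + (i == j)%:R.

Lemma sdeg_gt0 {N} (e : rel 'I_N) i : Rlt 0 (sdeg e i).
Proof. rewrite /sdeg natRE; change (Rlt 0 (Rplus (INR #|[set k | e i k]|) 1)); have := pos_INR #|[set k | e i k]|; lra. Qed.

Lemma sdeg_neq0 {N} (e : rel 'I_N) i : sdeg e i != 0.
Proof. apply/eqP=> h; have := sdeg_gt0 e i; rewrite h; exact: Rlt_irrefl. Qed.

Lemma Mw_ge0 {N} (e : rel 'I_N) i j : Rle 0 (Mw e i j).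
Proof. rewrite /Mw !natRE; apply: Rplus_le_le_0_compat; exact: pos_INR. Qed.

Lemma Gmx_E {N} (e : rel 'I_N) i j : Gmx e i j = Mw e i j / sdeg e i.
Proof.
set S := degmx e + 1%:M.
set D' : 'M[R]_N := diag_mx (\row_k (sdeg e k)^-1).
have hS : S = diag_mx (\row_k sdeg e k).
  apply/matrixP=> a b; rewrite !mxE /sdeg; case: eqP => [->|_]; rewrite /=.
    by rewrite mul1r mulr1n.
  by rewrite mul0r addr0 mulr0n.
have hD : D' *m S = 1%:M.
  rewrite hS; apply/matrixP=> a b; rewrite mul_diag_mx !mxE.
  case: eqP => [->|_]; rewrite ?mulr0 ?mulr1n ?mulr0n //.
  by rewrite mulVf // sdeg_neq0.
have hu : S \in unitmx by case: (mulmx1_unit hD).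
have hinv : invmx S = D' by rewrite -[invmx S]mul1mx -hD mulmxK.
rewrite /Gmx -/S hinv mul_diag_mx !mxE /Mw mulrC.
by [].
Qed.

Lemma Gamma_E {N} (e : rel 'I_N) g T i j :
  Gammamx e g T i j = exp (Rmult g T) * (i == j)%:R - (exp (Rmult g T) - 1) * (Mw e i j / sdeg e i).
Proof.
rewrite /Gammamx -(Gmx_E e i j); move: (Gmx e) => G.
by rewrite !mxE.
Qed.

Lemma sum_card {N} (e : rel 'I_N) j : \sum_i ((e j i)%:R : R) = #|[set k | e j k]|%:R.
Proof.
rewrite -natr_sum; congr (_%:R).
rewrite -sum1_card [in RHS]big_mkcond /=; apply: eq_bigr => i _.
by rewrite inE; case: (e j i).
Qed.

Lemma sum_delta {N} (j : 'I_N) : \sum_i (((i == j) : nat)%:R : R) = 1.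
Proof.
rewrite (bigD1 j) //= eqxx big1 ?addr0 // => i /negbTE ->; by [].
Qed.

Lemma Mw_sym {N} (e : rel 'I_N) : symmetric e -> forall i j, Mw e i j = Mw e j i.
Proof. by move=> hs i j; rewrite /Mw hs eq_sym. Qed.

Lemma colsum {N} (e : rel 'I_N) : symmetric e -> forall j, \sum_i Mw e i j = sdeg e j.
Proof.
move=> hs j; rewrite /Mw big_split /= sum_delta /sdeg -(sum_card e j).
by congr (_ + _); apply: eq_bigr => i _; rewrite hs.
Qed.

Lemma sum_abs (I : finType) (F : I -> R) : Rle (Rabs (\sum_i F i)) (\sum_i Rabs (F i)).
Proof.
apply: (big_ind2 (fun a b => Rle (Rabs a) b)).
- rewrite Rabs_R0; exact: Rle_refl.
- move=> x1 x2 y1 y2 h1 h2; apply: Rle_trans (Rabs_triang _ _) _.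
  exact: Rplus_le_compat.
- by move=> i _; apply: Rle_refl.
Qed.

Lemma sum_le (I : finType) (F G : I -> R) :
  (forall i, Rle (F i) (G i)) -> Rle (\sum_i F i) (\sum_i G i).
Proof.
move=> h; apply: (big_ind2 (fun a b => Rle a b)); first exact: Rle_refl.
  by move=> *; apply: Rplus_le_compat.
by move=> i _; apply: h.
Qed.

Lemma sum_ge0 (I : finType) (P : pred I) (F : I -> R) :
  (forall i, Rle 0 (F i)) -> Rle 0 (\sum_(i | P i) F i).
Proof.
move=> h; apply: (big_ind (fun a => Rle 0 a)); first exact: Rle_refl.
  by move=> x y hx hy; apply: Rplus_le_le_0_compat.
by move=> i _; apply: h.
Qed.

Lemma sum_gt0 (I : finType) (F : I -> R) j :
  (forall i, Rle 0 (F i)) -> Rlt 0 (F j) -> Rlt 0 (\sum_i F i).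
Proof.
move=> h hj; rewrite (bigD1 j) //=.
have := @sum_ge0 _ (fun i => i != j) _ h.
set S := \sum_(i | i != j) F i => hS.
change (Rlt 0 (Rplus (F j) S)); lra.
Qed.

Lemma sum_eq0 (I : finType) (F : I -> R) j :
  (forall i, Rle 0 (F i)) -> \sum_i F i = 0 -> F j = 0.
Proof.
move=> h hs; case: (Rle_lt_or_eq_dec _ _ (h j)) => [hj|<-//].
have := sum_gt0 _ _ _ h hj; rewrite hs; move/Rlt_irrefl => [].
Qed.

Lemma argmax_seq (T : eqType) (f : T -> R) (s : seq T) (x0 : T) :
  exists2 j, j \in x0 :: s & forall i, i \in x0 :: s -> Rle (f i) (f j).
Proof.
elim: s x0 => [|y s IH] x0.
  by exists x0 => [|i]; rewrite ?inE // => /eqP ->; apply: Rle_refl.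
have [j hj hmax] := IH y.
case: (Rle_lt_dec (f x0) (f j)) => hx.
  exists j; first by rewrite inE hj orbT.
  move=> i; rewrite inE => /orP [/eqP ->//|]; exact: hmax.
exists x0; first by rewrite inE eqxx.
move=> i; rewrite inE => /orP [/eqP ->|hi]; first exact: Rle_refl.
apply: Rle_trans (hmax _ hi) _; lra.
Qed.

Lemma argmax {N} (f : 'I_N -> R) : (0 < N)%N -> exists j, forall i, Rle (f i) (f j).
Proof.
move=> hN; have x0 : 'I_N := Ordinal hN.
have [j _ hj] := argmax_seq _ f (enum 'I_N) x0.
by exists j => i; apply: hj; rewrite inE mem_enum orbT.
Qed.

Lemma Lbound {N} (e : rel 'I_N) (U : 'I_N -> R) (lam : R) :
  symmetric e -> (0 < N)%N -> (exists j, U j <> 0) ->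
  (forall j, \sum_i U i * Mw e i j = lam * sdeg e j * U j) -> Rle (Rabs lam) 1.
Proof.
move=> hs hN [j0 hj0] heq.
have [j hj] := argmax (fun i => Rabs (U i)) hN.
have hUj : Rlt 0 (Rabs (U j)).
  apply: Rlt_le_trans (hj j0); exact: Rabs_pos_lt.
have h1 : Rle (Rabs (\sum_i U i * Mw e i j)) (Rabs (U j) * sdeg e j).
  apply: Rle_trans (sum_abs _ _) _.
  rewrite -colsum // -RmulE mulr_sumr; apply: sum_le => i.
  rewrite /= !RmulE Rabs_mult (Rabs_pos_eq (Mw e i j)).
  apply: Rmult_le_compat_r; [exact: Mw_ge0 | exact: hj].
  exact: Mw_ge0.
rewrite heq !RmulE !Rabs_mult (Rabs_pos_eq (sdeg e j)) in h1; last first.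
  exact: Rlt_le (sdeg_gt0 e j).
have hs0 := sdeg_gt0 e j.
move: h1; toR => h1.
have hp : Rlt 0 (Rmult (sdeg e j) (Rabs (U j))) by apply: Rmult_lt_0_compat.
apply: (Rmult_le_reg_r _ _ _ hp); nra.
Qed.

Lemma Lconst {N} (e : rel 'I_N) (U : 'I_N -> R) :
  symmetric e -> (0 < N)%N -> (forall i j : 'I_N, connect e i j) ->
  (forall j, \sum_i U i * Mw e i j = sdeg e j * U j) -> forall i k, U i = U k.
Proof.
move=> hs hN hc heq.
have [j hj] := argmax U hN.
have step : forall x y, U x = U j -> e y x -> U y = U j.
  move=> x y hx hyx.
  have h0 : \sum_i (U j - U i) * Mw e i x = 0.
    under eq_bigr do rewrite mulrBl.
    by rewrite sumrB heq -mulr_sumr colsum // hx mulrC subrr.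
  have := @sum_eq0 _ _ y _ h0.
  have hM : Rlt 0 (Mw e y x).
    rewrite /Mw hyx !natRE; toR; have := pos_INR (y == x); simpl INR; lra.
  move=> /(_ _) h.
  have {}h : (U j - U y) * Mw e y x = 0.
    apply: h => i; toR; apply: Rmult_le_pos; last exact: Mw_ge0.
    have := hj i; lra.
  move: h; toR => h.
  have := Rmult_integral _ _ h; case; [lra| move=> h'; rewrite h' in hM; lra].
have hcl : closed e [pred k | U k == U j].
  move=> x y hxy; rewrite !inE.
  apply/eqP/eqP => h.
    by apply: step h _; rewrite hs.
  by apply: step h hxy.
move=> i k.
have hi := closed_connect hcl (hc j i).
have hk := closed_connect hcl (hc j k).
rewrite !inE eqxx in hi hk.
by move/esym/eqP: hi => ->; move/esym/eqP: hk => ->.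
Qed.

Lemma ReD (x y : cpx) : Re (x + y) = Re x + Re y. Proof. by []. Qed.
Lemma ImD (x y : cpx) : Im (x + y) = Im x + Im y. Proof. by []. Qed.
Lemma Re_sum (I : finType) (F : I -> cpx) : Re (\sum_i F i) = \sum_i Re (F i).
Proof. exact: (big_morph Re ReD (erefl : Re 0 = 0)). Qed.
Lemma Im_sum (I : finType) (F : I -> cpx) : Im (\sum_i F i) = \sum_i Im (F i).
Proof. exact: (big_morph Im ImD (erefl : Im 0 = 0)). Qed.
Lemma ReM (x y : cpx) : Re (x * y) = Re x * Re y - Im x * Im y. Proof. by []. Qed.
Lemma ImM (x y : cpx) : Im (x * y) = Re x * Im y + Im x * Re y. Proof. by []. Qed.

Lemma eig_entries {N} (Gm : 'M[R]_N) (v : 'rV[cpx]_N) (mu : cpx) :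
  v *m map_mx RtoC Gm = mu *: v -> forall j,
  \sum_i Re (v 0 i) * Gm i j = Re mu * Re (v 0 j) - Im mu * Im (v 0 j) /\
  \sum_i Im (v 0 i) * Gm i j = Re mu * Im (v 0 j) + Im mu * Re (v 0 j).
Proof.
move=> h j; have := congr1 (fun A : 'rV[cpx]_N => A 0 j) h; rewrite /= !mxE => hj.
split.
- have := congr1 Re hj; rewrite Re_sum ReM => <-.
  apply: eq_bigr => i _; rewrite mxE ReM /RtoC /=; by rewrite mulr0 subr0.
- have := congr1 Im hj; rewrite Im_sum ImM => <-.
  apply: eq_bigr => i _; rewrite mxE ImM /RtoC /=; by rewrite mulr0 add0r.
Qed.

Lemma Lreal {N} (e : rel 'I_N) (c m1 m2 : R) (P Q : 'I_N -> R) :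
  symmetric e -> (exists j, P j <> 0 \/ Q j <> 0) ->
  (forall j, (c - 1) * \sum_i P i * Mw e i j = (c - m1) * sdeg e j * P j + m2 * sdeg e j * Q j) ->
  (forall j, (c - 1) * \sum_i Q i * Mw e i j = (c - m1) * sdeg e j * Q j - m2 * sdeg e j * P j) ->
  m2 = 0.
Proof.
move=> hs [j0 hj0] hA hB.
have hsym : \sum_j Q j * (\sum_i P i * Mw e i j) = \sum_j P j * (\sum_i Q i * Mw e i j).
  under eq_bigr do rewrite mulr_sumr.
  under [RHS]eq_bigr do rewrite mulr_sumr.
  rewrite exchange_big /=; apply: eq_bigr => a _; apply: eq_bigr => b _.
  rewrite (@Mw_sym _ e hs a b); ring.
have hW : m2 * \sum_j sdeg e j * (P j * P j + Q j * Q j) = 0.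
  transitivity ((c - 1) * (\sum_j Q j * (\sum_i P i * Mw e i j) -
                           \sum_j P j * (\sum_i Q i * Mw e i j))); last first.
    by rewrite hsym subrr mulr0.
  rewrite -sumrB !mulr_sumr; apply: eq_bigr => j _.
  rewrite mulrBr (mulrCA (c - 1) (Q j)) (mulrCA (c - 1) (P j)) hA hB; ring.
have hpos : Rlt 0 (\sum_j sdeg e j * (P j * P j + Q j * Q j)).
  have h1 : forall i, Rle 0 (sdeg e i * (P i * P i + Q i * Q i)).
    move=> i; have := sdeg_gt0 e i; toR => hi; apply: Rmult_le_pos; nra.
  apply: (sum_gt0 _ _ j0 h1).
  have := sdeg_gt0 e j0; toR => hs0.
  case: hj0 => h.
    have := Rsqr_pos_lt _ h; rewrite /Rsqr => hP.
    nra.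
  have := Rsqr_pos_lt _ h; rewrite /Rsqr => hP.
  nra.
move/eqP: hW; rewrite mulf_eq0 => /orP [/eqP //|/eqP h].
by rewrite h in hpos; case: (Rlt_irrefl _ hpos).
Qed.

Lemma final_bound (c m1 lam : R) : Rlt 0 c -> Rlt c 1 ->
  m1 = Rminus c (Rmult lam (Rminus c 1)) -> Rle (Rabs lam) 1 -> Rlt (-1) m1 /\ Rle m1 1.
Proof.
move=> h0 h1 -> hl.
have := Rle_abs lam; have := Rle_abs (- lam); rewrite Rabs_Ropp => ha hb.
split; nra.
Qed.

Lemma Lcase {N} (e : rel 'I_N) (c m1 : R) (U : 'I_N -> R) :
  symmetric e -> (0 < N)%N -> Rlt 0 c -> Rlt c 1 -> (exists j, U j <> 0) ->
  (forall j, (c - 1) * \sum_i U i * Mw e i j = (c - m1) * sdeg e j * U j) ->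
  Rlt (-1) m1 /\ Rle m1 1.
Proof.
move=> hs hN h0 h1 hU hA.
have hc1 : c - 1 != 0.
  apply/eqP; toR => h; lra.
pose lam := (c - m1) / (c - 1).
apply: (final_bound c m1 lam) => //.
  rewrite -RmulE -[Rminus c _]/(c - _) -[Rminus c 1]/(c - 1).
  by rewrite divfK // subKr.
apply: (Lbound _ _ _ hs hN hU) => j.
apply: (mulfI hc1); rewrite hA /lam; field; exact: hc1.
Qed.

Lemma gsum {N} (e : rel 'I_N) g T (p : 'I_N -> R) j :
  \sum_i p i * Gammamx e g T i j =
  exp (Rmult g T) * p j - (exp (Rmult g T) - 1) * \sum_i (p i / sdeg e i) * Mw e i j.
Proof.
set c := exp (Rmult g T).
under eq_bigr do rewrite Gamma_E mulrBr.
rewrite sumrB; congr (_ - _).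
  rewrite (bigD1 j) //= eqxx big1 ?addr0; first by rewrite mulr1n mulrCA mulr1 mulrC.
  by move=> i /negbTE ->; rewrite mulr0n !mulr0.
rewrite mulr_sumr; apply: eq_bigr => i _; rewrite /=; rewrite /c; ring.
Qed.

Lemma cbounds (g T : R) : Rlt 0 T -> Rlt g 0 ->
  Rlt 0 (exp (Rmult g T)) /\ Rlt (exp (Rmult g T)) 1.
Proof.
move=> hT hg; split; first exact: exp_pos.
rewrite -exp_0; apply: exp_increasing.
have : Rlt 0 (Rmult (-g) T) by apply: Rmult_lt_0_compat; lra.
nra.
Qed.

Lemma eig_part {N} (e : rel 'I_N) g T :
  (0 < N)%N -> symmetric e -> Rlt 0 T -> Rlt g 0 ->
  forall mu : cpx, eigenvalue (map_mx RtoC (Gammamx e g T)) mu ->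
     exists r : R, mu = RtoC r /\ Rlt (-1) r /\ Rle r 1.
Proof.
move=> hN hs hT hg mu /eigenvalueP [v hv vnz].
have [hc0 hc1] := cbounds _ _ hT hg.
have hE := eig_entries _ _ _ hv.
move: hc0 hc1 hE; set c := exp (Rmult g T) => hc0 hc1 hE.
pose P i := Re (v 0 i) / sdeg e i; pose Q i := Im (v 0 i) / sdeg e i.
have eP j : Re (v 0 j) = sdeg e j * P j by rewrite /P mulrC divfK // sdeg_neq0.
have eQ j : Im (v 0 j) = sdeg e j * Q j by rewrite /Q mulrC divfK // sdeg_neq0.
have hA j : (c - 1) * \sum_i P i * Mw e i j = (c - Re mu) * sdeg e j * P j + Im mu * sdeg e j * Q j.
  have [h1 _] := hE j; rewrite gsum -/c in h1.
  set X := (c - 1) * _.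
  have -> : X = c * Re (v 0 j) - (c * Re (v 0 j) - X) by ring.
  rewrite /X /P h1 (eP j) (eQ j); field; exact: sdeg_neq0.
have hB j : (c - 1) * \sum_i Q i * Mw e i j = (c - Re mu) * sdeg e j * Q j - Im mu * sdeg e j * P j.
  have [_ h1] := hE j; rewrite gsum -/c in h1.
  set X := (c - 1) * _.
  have -> : X = c * Im (v 0 j) - (c * Im (v 0 j) - X) by ring.
  rewrite /X /Q h1 (eP j) (eQ j); field; exact: sdeg_neq0.
have [j0 hj0] : exists j, v 0 j != 0.
  case: (pickP (fun j => v 0 j != 0)) => [j hj|h]; first by exists j.
  case/negP: vnz; apply/eqP/matrixP => a b; rewrite (ord1 a) mxE.
  by move: (h b) => /negbFE/eqP.
have hPQ : P j0 <> 0 \/ Q j0 <> 0.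
  case: (Req_dec (P j0) 0) => hp; last by left.
  case: (Req_dec (Q j0) 0) => hq; last by right.
  case/negP: hj0; apply/eqP.
  have -> : v 0 j0 = Cx (Re (v 0 j0)) (Im (v 0 j0)) by case: (v 0 j0).
  by rewrite eP eQ hp hq !mulr0.
have hm2 : Im mu = 0 by apply: (@Lreal _ e c (Re mu) (Im mu) P Q hs (ex_intro _ j0 hPQ) hA hB).
exists (Re mu); split.
  by move: hm2; clear; case: mu => a b /= ->.
case: hPQ => h.
  apply: (@Lcase _ e c (Re mu) P hs hN hc0 hc1 (ex_intro _ j0 h)) => j.
  by rewrite hA hm2 mul0r mul0r addr0.
apply: (@Lcase _ e c (Re mu) Q hs hN hc0 hc1 (ex_intro _ j0 h)) => j.
by rewrite hB hm2 mul0r mul0r subr0.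
Qed.

Lemma rowsum {N} (e : rel 'I_N) : symmetric e -> forall i, \sum_j Mw e i j = sdeg e i.
Proof. by move=> hs i; rewrite -colsum //; apply: eq_bigr => j _; rewrite Mw_sym. Qed.

Lemma Gamma_ones {N} (e : rel 'I_N) g T : symmetric e ->
  Gammamx e g T *m onesv N = onesv N.
Proof.
move=> hs; apply/matrixP => i k; rewrite !mxE.
under eq_bigr do rewrite [onesv N _ _]mxE Gamma_E mulr1.
rewrite sumrB (bigD1 i) //= eqxx big1 ?addr0; last first.
  by move=> j /negbTE; rewrite eq_sym => ->; rewrite mulr0n mulr0.
rewrite mulr1n mulr1 -mulr_sumr.
under eq_bigr do rewrite mulrC.
rewrite -mulr_sumr rowsum // mulVf ?sdeg_neq0 // mulr1.
by rewrite opprB addrCA subrr addr0.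
Qed.

Lemma Gamma_left {N} (e : rel 'I_N) g T : symmetric e ->
  (\row_j sdeg e j) *m Gammamx e g T = \row_j sdeg e j.
Proof.
move=> hs; apply/matrixP => a k; rewrite !mxE.
under eq_bigr do rewrite mxE.
rewrite gsum.
under eq_bigr do rewrite divff ?sdeg_neq0 // mul1r.
rewrite colsum //; ring.
Qed.

Lemma char_poly_conj {n} (A P Pinv : 'M[R]_n) : Pinv *m P = 1%:M ->
  char_poly (Pinv *m A *m P) = char_poly A.
Proof.
move=> hPP.
rewrite /char_poly /char_poly_mx.
have hX : ('X%:M : 'M[{poly R}]_n) = map_mx polyC Pinv *m 'X%:M *m map_mx polyC P.
  by rewrite -mulmxA mul_scalar_mx -scalemxAr -map_mxM hPP map_mx1 scalemx1.
rewrite !map_mxM {1}hX -mulmxBl -mulmxBr.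
rewrite !det_mulmx mulrAC -det_mulmx -map_mxM hPP map_mx1 det1 mul1r.
by [].
Qed.

Lemma char_poly_col0 {n} (B : 'M[R]_n.+1) : (forall i, B i ord0 = (i == ord0)%:R) ->
  char_poly B = ('X - 1%:P) * char_poly (row' ord0 (col' ord0 B)).
Proof.
move=> hB.
rewrite /char_poly (expand_det_col _ ord0) (bigD1 ord0) //= big1 ?addr0.
  rewrite /cofactor row'_col'_char_poly_mx !mxE hB eqxx /= addn0 expr0 mul1r mulr1n.
  by [].
move=> i /negbTE hi; rewrite !mxE hB hi mulr0n /= subr0 mul0r.
by [].
Qed.

Lemma left_fixed {N} (e : rel 'I_N) g T (z : 'rV[R]_N) :
  symmetric e -> (0 < N)%N -> connected_graph e -> Rlt 0 T -> Rlt g 0 ->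
  z *m Gammamx e g T = z -> exists a, forall i, z 0 i = a * sdeg e i.
Proof.
move=> hs hN hc hT hg hz.
have [hc0 hc1] := cbounds _ _ hT hg.
have hc1' : exp (Rmult g T) - 1 != 0 by apply/eqP; toR => h; lra.
pose U i := z 0 i / sdeg e i.
have hU : forall j, \sum_i U i * Mw e i j = sdeg e j * U j.
  move=> j; move/matrixP/(_ 0 j): hz; rewrite mxE gsum => h.
  apply: (mulfI hc1').
  have -> : sdeg e j * U j = z 0 j by rewrite /U mulrC divfK // sdeg_neq0.
  set S := (_ - 1) * _; have -> : S = exp (Rmult g T) * z 0 j - (exp (Rmult g T) * z 0 j - S) by ring.
  by rewrite /S /U h; ring.
have x0 : 'I_N := Ordinal hN.
exists (U x0) => i.
by rewrite (Lconst _ _ hs hN hc hU x0 i) /U divfK // sdeg_neq0.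
Qed.

Lemma mup_part {n} (e : rel 'I_n.+1) g T : symmetric e -> connected_graph e ->
  Rlt 0 T -> Rlt g 0 -> mup 1 (char_poly (Gammamx e g T)) = 1%N.
Proof.
move=> hs hc hT hg.
have [hc0 hc1] := cbounds _ _ hT hg.
pose u : 'cV[R]_n.+1 := onesv n.+1.
pose e0 : 'cV[R]_n.+1 := \col_i ((i == ord0)%:R).
pose W := u - e0. pose E := e0^T.
have EW : E *m W = 0.
  apply/matrixP => a b; rewrite !mxE; apply: big1 => j _; rewrite !mxE.
  by case: eqP => _; rewrite /= ?subrr ?mul0r ?mulr0.
have Ee0 : E *m e0 = 1%:M.
  apply/matrixP => a b; rewrite (ord1 a) (ord1 b) !mxE (bigD1 ord0) //= big1 ?addr0.
    by rewrite !mxE eqxx mulr1n mulr1.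
  by move=> j /negbTE hj; rewrite !mxE hj mulr0n mulr0.
have Eu : E *m u = 1%:M.
  apply/matrixP => a b; rewrite (ord1 a) (ord1 b) !mxE (bigD1 ord0) //= big1 ?addr0.
    by rewrite !mxE eqxx mulr1n mulr1.
  by move=> j /negbTE hj; rewrite !mxE hj mulr0n mul0r.
pose P := 1%:M + W *m E; pose Pinv := 1%:M - W *m E.
have hPP1 : Pinv *m P = 1%:M.
  rewrite /P /Pinv mulmxBl mul1mx mulmxDr mulmx1 -mulmxA (mulmxA E W E) EW mul0mx mulmx0.
  by rewrite addr0 addrK.
have hPP2 : P *m Pinv = 1%:M.
  rewrite /P /Pinv mulmxDl mul1mx mulmxBr mulmx1 -mulmxA (mulmxA E W E) EW mul0mx mulmx0.
  by rewrite subr0 -addrA addNr addr0.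
have hPe0 : P *m e0 = u by rewrite /P mulmxDl mul1mx -mulmxA Ee0 mulmx1 /W addrC -addrA addNr addr0.
have hPinvu : Pinv *m u = e0.
  by rewrite /Pinv mulmxBl mul1mx -mulmxA Eu mulmx1 /W opprB addrCA subrr addr0.
pose B := Pinv *m Gammamx e g T *m P.
have hcol0 : forall M : 'M[R]_n.+1, M *m e0 = e0 -> forall i, M i ord0 = (i == ord0)%:R.
  move=> M hM i; move/matrixP/(_ i ord0): hM; rewrite !mxE => <-.
  rewrite (bigD1 ord0) //= big1 ?addr0; first by rewrite !mxE eqxx mulr1n mulr1.
  by move=> j /negbTE hj; rewrite !mxE hj mulr0n mulr0.
have hBcol : forall i, B i ord0 = (i == ord0)%:R.
  apply: hcol0.
  by rewrite /B -!mulmxA hPe0 Gamma_ones // hPinvu.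
rewrite -(char_poly_conj (Gammamx e g T) _ _ hPP1) -/B (char_poly_col0 _ hBcol).
set q := char_poly (row' ord0 (col' ord0 B)).
have hq : ~~ root q 1.
  rewrite /q -eigenvalue_root_char; apply/eigenvalueP => -[w' hw' w'nz].
  pose w : 'rV[R]_n.+1 := \row_j (if unlift ord0 j is Some k then w' 0 k else 0).
  have w0 : w 0 ord0 = 0 by rewrite mxE unlift_none.
  have wl k : w 0 (lift ord0 k) = w' 0 k by rewrite mxE liftK.
  have hw : w *m B = w.
    apply/matrixP => a k; rewrite (ord1 a) [LHS]mxE big_ord_recl w0 mul0r add0r.
    case: (unliftP ord0 k) => [k' ->|->].
      rewrite wl; move/matrixP/(_ 0 k'): hw'; rewrite !mxE mul1r => <-.
      by apply: eq_bigr => j _; rewrite wl !mxE.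
    rewrite w0; apply: big1 => j _; rewrite hBcol.
    by rewrite eq_sym (negbTE (neq_lift ord0 j)) mulr0n mulr0.
  pose z := w *m Pinv.
  have hz : z *m Gammamx e g T = z.
    have := congr1 (mulmx^~ Pinv) hw; rewrite /B !mulmxA -(mulmxA _ P Pinv) hPP2 mulmx1.
    by [].
  have [a ha] := left_fixed _ _ _ _ hs (ltn0Sn n) hc hT hg hz.
  have hzu : z *m u = w *m e0 by rewrite /z -mulmxA hPinvu.
  have hwe0 : forall M : 'rV[R]_n.+1, (M *m e0) 0 0 = M 0 ord0.
    move=> M; rewrite mxE (bigD1 ord0) //= big1 ?addr0; first by rewrite !mxE eqxx mulr1n mulr1.
    by move=> j /negbTE hj; rewrite !mxE hj mulr0n mulr0.
  have hsum : \sum_i z 0 i = 0.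
    transitivity ((z *m u) 0 0).
      by rewrite [RHS]mxE; apply: eq_bigr => i _; rewrite [u _ _]mxE mulr1.
    by rewrite hzu hwe0 w0.
  have ha0 : a = 0.
    move: hsum; under eq_bigr do rewrite ha.
    rewrite -mulr_sumr => /eqP; rewrite mulf_eq0 => /orP [/eqP //|/eqP h].
    have := @sum_gt0 _ (fun i => sdeg e i) ord0 (fun i => Rlt_le _ _ (sdeg_gt0 e i)) (sdeg_gt0 e ord0).
    by rewrite h => /Rlt_irrefl.
  have hz0 : z = 0 by apply/matrixP => i j; rewrite (ord1 i) ha ha0 mul0r mxE.
  have hw0 : w = 0.
    by rewrite -[w]mulmx1 -hPP1 mulmxA -/z hz0 mul0mx.
  case/negP: w'nz; apply/eqP/matrixP => i k; rewrite (ord1 i) -wl hw0 !mxE.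
  by [].
rewrite mulrC mupMr // -[X in mup _ X]expr1 mup_XsubCX eqxx.
by [].
Qed.

Section ODE.
Local Open Scope R_scope.

Lemma limit1_in_sub (f : R -> R) (D1 D2 : R -> Prop) l x0 :
  (forall x, D2 x -> D1 x) -> limit1_in f D1 l x0 -> limit1_in f D2 l x0.
Proof.
move=> hD h eps he; have [alp [ha H]] := h eps he.
exists alp; split => // x [hx hd]; apply: H; split => //; exact: hD.
Qed.

Lemma deriv_within_interior (y : R -> R) a b l t :
  a < t -> t < b ->
  deriv_within y (fun s => a <= s /\ s < b) l t -> derivable_pt_lim y t l.
Proof.
move=> hat htb h eps he.
have [alp [ha H]] := h eps he.
have hd : 0 < Rmin alp (Rmin (t - a) (b - t)).
  apply: Rmin_pos => //; apply: Rmin_pos; lra.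
exists (mkposreal _ hd) => hh hh0 hhd /=.
simpl in hhd.
have h1 := Rmin_l alp (Rmin (t - a) (b - t)).
have h2 := Rmin_r alp (Rmin (t - a) (b - t)).
have h3 := Rmin_l (t - a) (b - t).
have h4 := Rmin_r (t - a) (b - t).
have hab := Rabs_def2 _ _ hhd.
have H1 := H (t + hh); rewrite /dist /= /R_dist in H1.
replace (t + hh - t) with hh in H1 by nra.
apply: H1; split; first split.
- split; lra.
- lra.
- replace (t + hh - t) with hh by nra. lra.
Qed.

Lemma const_open (h : R -> R) a b :
  (forall t, a < t < b -> derivable_pt_lim h t 0) ->
  forall t1 t2, a < t1 < b -> a < t2 < b -> h t1 = h t2.
Proof.
move=> H.
suff key : forall t1 t2, a < t1 < b -> a < t2 < b -> t1 <= t2 -> h t1 = h t2.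
  move=> t1 t2 h1 h2; case: (Rle_dec t1 t2) => hle; first exact: key.
  symmetry; apply: key => //; lra.
move=> t1 t2 h1 h2 hle.
have pr : forall x, t1 < x < t2 -> derivable_pt h x.
  move=> x hx; exists 0; apply: H; lra.
have hcont : forall x, t1 <= x <= t2 -> continuity_pt h x.
  move=> x hx; apply: derivable_continuous_pt; exists 0; apply: H; lra.
have hder : forall x (P : t1 < x < t2), derive_pt h x (pr x P) = 0.
  move=> x P; rewrite /derive_pt; case: (pr x P) => l hl /=.
  apply: (uniqueness_limite h x) hl _; apply: H; lra.
have hc := @null_derivative_loc h t1 t2 pr hcont hder.
symmetry; apply: hc; lra.
Qed.

Lemma lin_deriv (g a p : R) : derivable_pt_lim (fun s => - (g * (s - a))) p (- g).
Proof.
move=> eps he; exists (mkposreal 1 Rlt_0_1) => hh hh0 _.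
replace ((- (g * (p + hh - a)) - - (g * (p - a))) / hh - - g) with 0 by (field_simplify; [nra|exact hh0]).
by rewrite Rabs_R0.
Qed.

Definition Ef (g a : R) := fun s => exp (- (g * (s - a))).

Lemma Ef_deriv g a p : derivable_pt_lim (Ef g a) p (Ef g a p * (- g)).
Proof.
exact: (derivable_pt_lim_comp (fun s => - (g * (s - a))) exp p (- g) _ (lin_deriv g a p) (derivable_pt_lim_exp _)).
Qed.

Lemma h_deriv (y : R -> R) K g a t l :
  derivable_pt_lim y t l ->
  derivable_pt_lim (fun s => (y s - K) * Ef g a s) t (l * Ef g a t + (y t - K) * (Ef g a t * - g)).
Proof.
move=> hy.
have h1 : derivable_pt_lim (fun s => y s - K) t (l - 0).
  exact: (derivable_pt_lim_minus y (fct_cte K) t l 0 hy (derivable_pt_lim_const K t)).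
rewrite Rminus_0_r in h1.
exact: (derivable_pt_lim_mult _ _ t _ _ h1 (Ef_deriv g a t)).
Qed.

Lemma endpoint (f : R -> R) D p C : continue_in f D p ->
  (forall del, 0 < del -> exists s, D s /\ p <> s /\ Rabs (s - p) < del /\ f s = C) ->
  f p = C.
Proof.
move=> hc hs; case: (Req_dec (f p) C) => // hne.
have he : 0 < Rabs (f p - C) by apply: Rabs_pos_lt; lra.
have [alp [ha H]] := hc _ he.
have [s [hD [hps [hsp hfs]]]] := hs alp ha.
have := H s; rewrite /dist /= /R_dist hfs => H1.
have H2 : Rabs (C - f p) < Rabs (f p - C).
  by apply: H1; split; [split|].
rewrite Rabs_minus_sym in H2; lra.
Qed.

Lemma h_cont (y : R -> R) K g a p :
  continue_in y (fun s => 0 <= s) p ->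
  continue_in (fun s => (y s - K) * Ef g a s) (fun s => 0 <= s) p.
Proof.
move=> hy.
apply: (limit_mul (fun s => y s - K) (Ef g a)).
  apply: (limit_minus y (fun _ => K)) => //.
  exact: (limit_free (fun _ => K) _ 0 p).
have hE : continuity_pt (Ef g a) p.
  apply: derivable_continuous_pt; exists (Ef g a p * - g); exact: Ef_deriv.
apply: (limit1_in_sub _ _ _ _ _ _ hE).
by move=> x [hx hne]; split.
Qed.

Lemma ode_step (y : R -> R) (a b K g : R) : 0 <= a -> a < b ->
  (forall t, 0 <= t -> continue_in y (fun s => 0 <= s) t) ->
  (forall t, a <= t -> t < b -> deriv_within y (fun s => a <= s /\ s < b) (g * y t - g * K) t) ->
  y b = K + (y a - K) * exp (g * (b - a)).
Proof.
move=> ha0 hab hcy hder.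
pose h := fun s => (y s - K) * Ef g a s.
have hd : forall t, a < t < b -> derivable_pt_lim h t 0.
  move=> t [h1 h2].
  have H1 := h_deriv y K g a t _ (deriv_within_interior _ _ _ _ _ h1 h2 (hder t (Rlt_le _ _ h1) h2)).
  replace 0 with ((g * y t - g * K) * Ef g a t + (y t - K) * (Ef g a t * - g)) by nra.
  exact: H1.
pose m := (a + b) / 2.
have hm : a < m < b by rewrite /m; split; lra.
have hcst : forall t, a < t < b -> h t = h m.
  move=> t ht; exact: (const_open _ _ _ hd _ _ ht hm).
have hA : h a = h m.
  apply: (endpoint _ (fun s => 0 <= s)); first exact: h_cont _ _ _ _ _ (hcy a ha0).
  move=> del hdel.
  have [d [hdp [hd1 hd2]]] : exists d, 0 < d /\ d <= del / 2 /\ d <= (b - a) / 2.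
    exists (Rmin (del / 2) ((b - a) / 2)); split; first by apply: Rmin_pos; lra.
    split; [exact: Rmin_l | exact: Rmin_r].
  exists (a + d); split; [lra|split; [lra|split]].
    replace (a + d - a) with d by nra.
    rewrite Rabs_pos_eq; lra.
  apply: hcst; lra.
have hB : h b = h m.
  apply: (endpoint _ (fun s => 0 <= s)); first exact: h_cont _ _ _ _ _ (hcy b ltac:(lra)).
  move=> del hdel.
  have [d [hdp [hd1 hd2]]] : exists d, 0 < d /\ d <= del / 2 /\ d <= (b - a) / 2.
    exists (Rmin (del / 2) ((b - a) / 2)); split; first by apply: Rmin_pos; lra.
    split; [exact: Rmin_l | exact: Rmin_r].
  exists (b - d); split; [lra|split; [lra|split]].
    replace (b - d - b) with (- d) by nra.
    rewrite Rabs_Ropp Rabs_pos_eq; lra.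
  apply: hcst; lra.
have: h b = h a by rewrite hA hB.
rewrite /h /Ef.
replace (- (g * (a - a))) with 0 by nra.
rewrite exp_0 Rmult_1_r exp_Ropp => H.
have hpos := exp_pos (g * (b - a)).
have -> : y b = (y b - K) * / exp (g * (b - a)) * exp (g * (b - a)) + K by (field_simplify; [nra|lra]).
rewrite H; nra.
Qed.
End ODE.

Lemma mup_partN {N} (e : rel 'I_N) g T : (0 < N)%N -> symmetric e -> connected_graph e ->
  Rlt 0 T -> Rlt g 0 -> mup 1 (char_poly (Gammamx e g T)) = 1%N.
Proof. by case: N e => [//|n] e _; apply: mup_part. Qed.

Lemma Gamma_mul {N} (e : rel 'I_N) g T (v : 'cV[R]_N) i :
  (Gammamx e g T *m v) i ord0 = exp (Rmult g T) * v i ord0 - (exp (Rmult g T) - 1) * (Gmx e *m v) i ord0.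
Proof.
rewrite /Gammamx mulmxBl -!scalemxAl mul1mx.
by rewrite !mxE.
Qed.

Theorem mainTheorem7 (N : nat) (e : rel 'I_N) (T g : R)
  (hN : (0 < N)%nat) (hsimple : simple_graph e) (hconn : connected_graph e)
  (hT : Rlt 0 T) (hg : Rlt g 0) :
  (* every (complex) eigenvalue of Gamma is real and lies in (-1, 1] *)
  (forall mu : cpx, eigenvalue (map_mx RtoC (Gammamx e g T)) mu ->
     exists r : R, mu = RtoC r /\ Rlt (-1) r /\ Rle r 1)
  (* 1 is an eigenvalue of algebraic multiplicity one *)
  /\ eigenvalue (Gammamx e g T) 1
  /\ mup 1 (char_poly (Gammamx e g T)) = 1%N
  (* Gamma 1_N = 1_N *)
  /\ Gammamx e g T *m onesv N = onesv N
  (* sampled-data solutions satisfy x((k+1)T) = Gamma x(kT) *)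
  /\ (forall x : R -> 'cV[R]_N,
        (forall (i : 'I_N) (t : R), Rle 0 t ->
           continue_in (fun s => x s i ord0) (fun s => Rle 0 s) t) ->
        (forall (k : nat) (i : 'I_N) (t : R),
           Rle (Rmult (INR k) T) t -> Rlt t (Rmult (INR k.+1) T) ->
           deriv_within (fun s => x s i ord0)
             (fun s => Rle (Rmult (INR k) T) s /\ Rlt s (Rmult (INR k.+1) T))
             (g * x t i ord0 - g * (Gmx e *m x (Rmult (INR k) T)) i ord0) t) ->
        forall k : nat, x (Rmult (INR k.+1) T) = Gammamx e g T *m x (Rmult (INR k) T)).
Proof.
have [hs _] := hsimple.
split; first exact: eig_part.
split.
  apply/eigenvalueP; exists (\row_j sdeg e j); first by rewrite Gamma_left // scale1r.
  apply/eqP => /matrixP/(_ 0 (Ordinal hN)); rewrite !mxE => h.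
  by move: (sdeg_neq0 e (Ordinal hN)); rewrite h eqxx.
split; first exact: mup_partN.
split; first exact: Gamma_ones.
move=> x hcont hder k; apply/matrixP => i j; rewrite (ord1 j).
have hk0 : Rle 0 (Rmult (INR k) T) by apply: Rmult_le_pos; [exact: pos_INR | lra].
have hk1 : Rlt (Rmult (INR k) T) (Rmult (INR k.+1) T).
  rewrite S_INR; lra.
have H := ode_step (fun s => x s i ord0) (Rmult (INR k) T) (Rmult (INR k.+1) T)
   ((Gmx e *m x (Rmult (INR k) T)) i ord0) g hk0 hk1 (fun t ht => hcont i t ht)
   (fun t h1 h2 => hder k i t h1 h2).
simpl in H.
rewrite H Gamma_mul.
have -> : Rminus (Rmult (INR k.+1) T) (Rmult (INR k) T) = T by rewrite S_INR; nra.
toR; set G0 := (Gmx e *m _) i ord0; set X0 := x _ i ord0; set c0 := exp _; nra.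
Qed.
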